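(* Let $r\ge1$. For any $\gamma\in\mathrm{GL}_r(F_\infty)$ there exist positive constants $c_1,c_2,c_3$ such that for every $\omega\in\Omega^r$: (a) $h(\omega)\le c_1|j(\gamma,\omega)|\,|\omega|^{-1}\le1$; (b) $|\gamma(\omega)|\le c_2\,h(\omega)^{-1}$; (c) $h(\gamma(\omega))\ge c_3\,h(\omega)$.
   Context: Let $F$ be a global function field, $\infty$ a place, $F_\infty$ the completion at $\infty$, $\mathbb{C}_\infty$ the completion of an algebraic closure of $F_\infty$ with absolute value $|\cdot|$. Fix $\xi\in\mathbb{C}_\infty^\times$. $\Omega^r$ is the set of column vectors $\omega=(\omega_1,\dots,\omega_r)^T\in\mathbb{C}_\infty^r$ with $F_\infty$-linearly independent entries and $\omega_r=\xi$. For $\gamma\in\mathrm{GL}_r(F_\infty)$: $j(\gamma,\omega):=\xi^{-1}\cdot(\text{last entry of }\gamma\omega)$ and $\gamma(\omega):=j(\gamma,\omega)^{-1}\gamma\omega\in\Omega^r$. A linear form $F_\infty^r\to F_\infty$ is unimodular if its largest coefficient has absolute value $1$. Put $|\omega|:=\max_i|\omega_i|$ and $h(\omega):=|\omega|^{-1}\inf\{|\ell(\omega)|:\ell$ a unimodular $F_\infty$-linear form$\}$. *)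

(* Defs.v *)
From HB Require Import structures.
From mathcomp Require Import all_boot all_order all_algebra.
From mathcomp Require Import classical_sets reals.
Set Implicit Arguments. Unset Strict Implicit. Unset Printing Implicit Defensive.
Import Order.TTheory GRing.Theory Num.Theory.
Local Open Scope ring_scope.

(* Setting:  K plays the role of F_oo, C the role of C_oo, with
   iota : K -> C the inclusion F_oo \subset C_oo, and abs : C -> R the
   (non-archimedean) absolute value of C_oo; the absolute value of F_oo is
   abs \o iota. *)

Definition cauchy_seq (R : realType) (T : zmodType) (a : T -> R) (u : nat -> T) :=
  forall e : R, 0 < e -> exists N : nat, forall m k : nat,
    (N <= m)%N -> (N <= k)%N -> a (u m - u k) < e.

Definition converges_to (R : realType) (T : zmodType) (a : T -> R) (u : nat -> T) (l : T) :=
  forall e : R, 0 < e -> exists N : nat, forall m : nat, (N <= m)%N -> a (u m - l) < e.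

(* Hypotheses: (K, abs \o iota) is a local field of positive characteristic
   (equivalently: the completion F_oo of a global function field F at a place),
   and C is algebraically closed, complete, and contains the algebraic
   closure of K as a dense subset (i.e. C is the completion of an algebraic
   closure of K). *)
Record function_field_setting (R : realType) (K : fieldType)
    (C : closedFieldType) (iota : {rmorphism K -> C}) (abs : C -> R) : Prop := {
  abs_ge0 : forall x, 0 <= abs x;
  abs_eq0 : forall x, (abs x = 0) <-> (x = 0);
  abs_mul : forall x y, abs (x * y) = abs x * abs y;
  abs_ultra : forall x y, abs (x + y) <= Num.max (abs x) (abs y);
  K_pchar : exists p : nat, prime p /\ p \in [pchar K];
  K_discrete : exists pi : K, 0 < abs (iota pi) < 1 /\
      forall x : K, x != 0 -> exists z : int, abs (iota x) = abs (iota pi) ^ z;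
  K_finite_residue : exists s : seq K, forall x : K, abs (iota x) <= 1 ->
      exists2 a, a \in s & abs (iota (x - a)) < 1;
  K_complete : forall u : nat -> K, cauchy_seq (fun x => abs (iota x)) u ->
      exists l : K, converges_to (fun x => abs (iota x)) u l;
  C_complete : forall u : nat -> C, cauchy_seq abs u ->
      exists l : C, converges_to abs u l;
  C_alg_dense : forall (x : C) (e : R), 0 < e -> exists y : C,
      abs (x - y) < e /\ exists p : {poly K}, p != 0 /\ root (map_poly iota p) y
}.

Section Defs.
Variables (R : realType) (K : fieldType) (C : closedFieldType).
Variables (iota : {rmorphism K -> C}) (abs : C -> R) (xi : C).

Definition normv (m : nat) (omega : 'cV[C]_m) : R :=
  \big[Num.max/0]_(i < m) abs (omega i 0).

Definition lform (m : nat) (l : 'rV[K]_m) (omega : 'cV[C]_m) : C :=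
  \sum_(i < m) iota (l 0 i) * omega i 0.

Definition unimodular (m : nat) (l : 'rV[K]_m) : Prop :=
  \big[Num.max/0]_(i < m) abs (iota (l 0 i)) = 1.

Definition hgt (m : nat) (omega : 'cV[C]_m) : R :=
  (normv omega)^-1 *
  inf [set y : R | exists l : 'rV[K]_m, unimodular l /\ y = abs (lform l omega)].

(* Omega^r, r = n.+1 : entries F_oo-linearly independent, last entry xi *)
Definition Omega (n : nat) (omega : 'cV[C]_n.+1) : Prop :=
  omega ord_max 0 = xi /\
  forall a : 'rV[K]_n.+1, lform a omega = 0 -> a = 0.

Definition jfac (n : nat) (gamma : 'M[K]_n.+1) (omega : 'cV[C]_n.+1) : C :=
  xi^-1 * (map_mx iota gamma *m omega) ord_max 0.

Definition gact (n : nat) (gamma : 'M[K]_n.+1) (omega : 'cV[C]_n.+1) : 'cV[C]_n.+1 :=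
  (jfac gamma omega)^-1 *: (map_mx iota gamma *m omega).

End Defs.

(* Main.v *)
Require Import Defs.
From HB Require Import structures.
From mathcomp Require Import all_boot all_order all_algebra.
From mathcomp Require Import classical_sets reals boolp.
From mathcomp Require Import ring lra.
Set Implicit Arguments. Unset Strict Implicit. Unset Printing Implicit Defensive.
Import Order.TTheory GRing.Theory Num.Theory.
Local Open Scope ring_scope.

Section Aux.
Variables (R : realType) (K : fieldType) (C : closedFieldType).
Variables (iota : {rmorphism K -> C}) (abs : C -> R).
Hypothesis Hset : function_field_setting iota abs.
Let absge0 := abs_ge0 Hset.
Let absM := abs_mul Hset.
Let absU := abs_ultra Hset.

Lemma abs0 : abs 0 = 0. Proof. by apply/(abs_eq0 Hset). Qed.
Lemma abs1 : abs 1 = 1.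
Proof.
have h := abs_mul Hset 1 1; rewrite mulr1 in h.
have nz : abs 1 != 0 by apply/eqP => /(abs_eq0 Hset) /eqP; rewrite oner_eq0.
by apply/(mulfI nz); rewrite mulr1 -h.
Qed.
Lemma absN x : abs (- x) = abs x.
Proof.
have h1 : abs (-1) = 1.
  have h := abs_mul Hset (-1) (-1); rewrite mulrNN mulr1 abs1 in h.
  have g := abs_ge0 Hset (-1).
  nra.
by rewrite -mulN1r (abs_mul Hset) h1 mul1r.
Qed.
Lemma absV x : abs (x^-1) = (abs x)^-1.
Proof.
have [->|nz] := eqVneq x 0; first by rewrite invr0 abs0 invr0.
have h := abs_mul Hset x x^-1; rewrite mulfV // abs1 in h.
have nz' : abs x != 0 by apply/eqP => /(abs_eq0 Hset) /eqP; rewrite (negbTE nz).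
by apply: (mulfI nz'); rewrite mulfV // -h.
Qed.
Lemma absB x y : abs (x - y) <= Num.max (abs x) (abs y).
Proof. by rewrite -(absN y); apply: (abs_ultra Hset). Qed.
Lemma abs_gt0 x : x != 0 -> 0 < abs x.
Proof.
move=> nz; rewrite lt0r absge0 andbT; apply/eqP => /(abs_eq0 Hset) /eqP.
by rewrite (negbTE nz).
Qed.

Lemma bigmax_ge0 m (F : 'I_m -> R) : 0 <= \big[Num.max/0]_(i < m) F i.
Proof.
rewrite unlock; elim: (index_enum _) => //= a r IH.
by rewrite le_max IH orbT.
Qed.
Lemma le_bigmax_seq (I : eqType) (r : seq I) (F : I -> R) i : i \in r ->
  F i <= \big[Num.max/0]_(j <- r) F j.
Proof.
elim: r => // a r IH; rewrite in_cons big_cons le_max => /orP[/eqP->|/IH->];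
  by rewrite ?lexx ?orbT.
Qed.
Lemma le_bigmax m (F : 'I_m -> R) i : F i <= \big[Num.max/0]_(j < m) F j.
Proof. by apply: le_bigmax_seq; rewrite mem_index_enum. Qed.
Lemma bigmax_le m (F : 'I_m -> R) b : 0 <= b -> (forall i, F i <= b) ->
  \big[Num.max/0]_(i < m) F i <= b.
Proof. by move=> h0 hF; apply: (big_ind (fun x => x <= b)) => // x y hx hy; rewrite ge_max hx. Qed.
Lemma bigmax_lt m (F : 'I_m -> R) b : 0 < b -> (forall i, F i < b) ->
  \big[Num.max/0]_(i < m) F i < b.
Proof. by move=> h0 hF; apply: (big_ind (fun x => x < b)) => // x y hx hy; rewrite gt_max hx. Qed.
Lemma bigmax_attained m (F : 'I_m.+1 -> R) : exists k, forall j, F j <= F k.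
Proof. by exists [arg max_(i > ord0) F i]%O; case: arg_maxP => // i _ h j; apply: h. Qed.
Lemma bigmax_eq m (F : 'I_m -> R) k : (forall j, F j <= F k) -> 0 <= F k ->
  \big[Num.max/0]_(j < m) F j = F k.
Proof. by move=> h h0; apply/le_anti; rewrite bigmax_le // le_bigmax. Qed.

Lemma ultra_sum m (F : 'I_m -> C) : abs (\sum_(i < m) F i) <= \big[Num.max/0]_(i < m) abs (F i).
Proof.
apply: (big_ind2 (fun x y => abs x <= y)); first by rewrite abs0.
  move=> x1 y1 x2 y2 h1 h2; apply: le_trans (abs_ultra Hset _ _) _.
  by rewrite ge_max !le_max h1 h2 orbT.
by move=> i _.
Qed.

Definition ma m (l : 'rV[K]_m) := \big[Num.max/0]_(i < m) abs (iota (l 0 i)).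
Definition Iset m (w : 'cV[C]_m) :=
  [set y : R | exists l : 'rV[K]_m, unimodular iota abs l /\ y = abs (lform iota l w)]%classic.
Definition Inf m (w : 'cV[C]_m) := inf (Iset w).

Lemma ma_ge0 m (l : 'rV[K]_m) : 0 <= ma l.
Proof. exact: bigmax_ge0. Qed.

Lemma lform_upper m (l : 'rV[K]_m) w : abs (lform iota l w) <= ma l * normv abs w.
Proof.
apply: le_trans (ultra_sum _) _.
apply: bigmax_le => [|i]; first by rewrite mulr_ge0 // ?ma_ge0 ?bigmax_ge0.
rewrite absM ler_pM // ?absge0 //; last exact: (le_bigmax (fun i => abs (w i 0))).
exact: (le_bigmax (fun i => abs (iota (l 0 i)))).
Qed.

Lemma lformB m (a b : 'rV[K]_m) w : lform iota (a - b) w = lform iota a w - lform iota b w.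
Proof.
rewrite /lform -sumrB; apply: eq_bigr => i _.
by rewrite !mxE rmorphB mulrBl.
Qed.
Lemma lformD m (a b : 'rV[K]_m) w : lform iota (a + b) w = lform iota a w + lform iota b w.
Proof.
rewrite /lform -big_split; apply: eq_bigr => i _.
by rewrite !mxE rmorphD mulrDl.
Qed.
Lemma lformZ m (c : K) (a : 'rV[K]_m) w : lform iota (c *: a) w = iota c * lform iota a w.
Proof.
rewrite /lform mulr_sumr; apply: eq_bigr => i _.
by rewrite !mxE rmorphM mulrA.
Qed.

Lemma Iset_lb m (w : 'cV[C]_m) : has_lbound (Iset w).
Proof. by exists 0 => y [l [_ ->]]; apply: absge0. Qed.

Lemma Iset_ne m (w : 'cV[C]_m.+1) : (Iset w !=set0)%classic.
Proof.
exists (abs (lform iota (\row_i ((i == ord0)%:R : K)) w)).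
exists (\row_i ((i == ord0)%:R : K)); split=> //.
rewrite /unimodular (@bigmax_eq _ _ ord0); first by rewrite mxE eqxx rmorph1 abs1.
  by move=> j; rewrite !mxE eqxx rmorph1 abs1; case: (j == ord0); rewrite ?rmorph1 ?rmorph0 ?abs1 ?abs0.
by rewrite mxE eqxx rmorph1 abs1.
Qed.

Lemma Inf_ge0 m (w : 'cV[C]_m.+1) : 0 <= Inf w.
Proof. by apply: lb_le_inf; [apply: Iset_ne | move=> y [l [_ ->]]; apply: absge0]. Qed.

Lemma Inf_le m (w : 'cV[C]_m) l : unimodular iota abs l -> Inf w <= abs (lform iota l w).
Proof. by move=> hl; apply: (ge_inf (Iset_lb w)); exists l. Qed.

Lemma lform_lower m (v : 'rV[K]_m.+1) w : ma v * Inf w <= abs (lform iota v w).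
Proof.
have [k hk] := bigmax_attained (fun i => abs (iota (v 0 i))).
have mae : ma v = abs (iota (v 0 k)) by apply: bigmax_eq => //; apply: absge0.
have [vk0|vk0] := eqVneq (v 0 k) 0.
  by rewrite mae vk0 rmorph0 abs0 mul0r absge0.
have pk : 0 < abs (iota (v 0 k)) by apply: abs_gt0; rewrite fmorph_eq0.
have hu : unimodular iota abs ((v 0 k)^-1 *: v).
  rewrite /unimodular (@bigmax_eq _ _ k).
    by rewrite mxE rmorphM fmorphV absM absV mulVf // gt_eqF.
  move=> j; rewrite !mxE !rmorphM !fmorphV !absM !absV mulVf ?gt_eqF //.
    by rewrite mulrC ler_pdivrMr // mul1r hk.
  by rewrite mxE rmorphM fmorphV absM absV mulVf ?gt_eqF.
have := Inf_le w hu; rewrite lformZ absM fmorphV absV => h.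
by rewrite mae mulrC -ler_pdivlMr // mulrC.
Qed.

Lemma small0 (x : C) : (forall e : R, 0 < e -> abs x < e) -> x = 0.
Proof.
move=> h; apply: contrapT => /eqP nz.
by have := h _ (abs_gt0 nz); rewrite ltxx.
Qed.

Lemma arch (e : R) : 0 < e -> exists N : nat, forall j, (N <= j)%N -> (j.+1%:R)^-1 < e.
Proof.
move=> e0; exists (Num.bound e^-1) => j hj.
have h0 : 0 <= e^-1 by rewrite invr_ge0 ltW.
have h1 := archi_boundP h0.
have h2 : (Num.bound e^-1)%:R <= j.+1%:R :> R by rewrite ler_nat; apply: leq_trans hj _.
rewrite invf_plt // ?ltr0Sn //; move: h1 h2; set a := e^-1; set b := _%:R; set c := _%:R.
move=> h1 h2; first exact: (lt_le_trans h1 h2).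
by rewrite posrE /c ltr0Sn.
Qed.

Lemma lform_e m (kk : 'I_m) w : lform iota (\row_p ((p == kk)%:R : K)) w = w kk 0.
Proof.
rewrite /lform (bigD1 kk) //= mxE eqxx rmorph1 mul1r big1 ?addr0 // => i /negPf hi.
by rewrite mxE hi rmorph0 mul0r.
Qed.

Definition supp m k (l : 'rV[K]_m) := forall i : 'I_m, (k <= i)%N -> l 0 i = 0.
Definition PP m (w : 'cV[C]_m) k := exists2 M : R, 0 < M &
  forall l, supp k l -> ma l <= M * abs (lform iota l w).

Lemma PP0 m (w : 'cV[C]_m) : PP w 0.
Proof.
exists 1 => // l hl; apply: le_trans (_ : 0 <= _); last by rewrite mul1r absge0.
by apply: bigmax_le => // i; rewrite hl // rmorph0 abs0.
Qed.


Lemma delta_ex m (w : 'cV[C]_m) (hind : forall a, lform iota a w = 0 -> a = 0)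
   k (hk : (k < m)%N) : PP w k ->
  exists2 d : R, 0 < d & forall a, supp k a -> d <= abs (w (Ordinal hk) 0 + lform iota a w).
Proof.
move=> [M M0 hM]; set kk := Ordinal hk.
case: (pselect (exists2 d : R, 0 < d & forall a, supp k a -> d <= abs (w kk 0 + lform iota a w))) => // hno.
exfalso.
have hseq : forall j : nat, exists a, supp k a /\ abs (w kk 0 + lform iota a w) < (j.+1%:R)^-1.
  move=> j; apply: contrapT => hn; apply: hno; exists (j.+1%:R)^-1; first by rewrite invr_gt0 ltr0Sn.
  move=> a ha.
  rewrite leNgt; apply/negP => hlt; apply: hn; by exists a.
have [f hf] := choice hseq.
have hcau : forall p, cauchy_seq (fun x => abs (iota x)) (fun j => f j 0 p).
  move=> p e e0.
  have [N hN] := arch (divr_gt0 e0 M0).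
  exists N => m1 m2 h1 h2.
  have s12 : supp k (f m1 - f m2).
    by move=> i hi; rewrite !mxE (proj1 (hf m1)) // (proj1 (hf m2)) // subrr.
  apply: le_lt_trans (_ : ma (f m1 - f m2) < e).
    by have := le_bigmax (fun i => abs (iota ((f m1 - f m2) 0 i))) p; rewrite !mxE.
  apply: le_lt_trans (hM _ s12) _.
  rewrite mulrC -ltr_pdivlMr //.
  have -> : lform iota (f m1 - f m2) w = (w kk 0 + lform iota (f m1) w) - (w kk 0 + lform iota (f m2) w).
    by rewrite lformB; ring.
  apply: le_lt_trans (absB _ _) _; rewrite gt_max.
  by rewrite (lt_trans (proj2 (hf m1))) ?hN // (lt_trans (proj2 (hf m2))) ?hN.
have hlim : forall p, exists l, converges_to (fun x => abs (iota x)) (fun j => f j 0 p) l.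
  by move=> p; apply: (K_complete Hset).
have [g hg] := choice hlim.
have gk : g kk = 0.
  apply/eqP; rewrite -(fmorph_eq0 iota); apply/eqP; apply: small0 => e e0.
  have [N hN] := hg kk e e0; have := hN N (leqnn _).
  by rewrite (proj1 (hf N)) // sub0r rmorphN absN.
set b := \row_p g p.
have hZ : w kk 0 + lform iota b w = 0.
  apply: small0 => e e0.
  set W := normv abs w.
  have W0 : 0 <= W by apply: bigmax_ge0.
  have e'0 : 0 < e / (W + 1) by rewrite divr_gt0 // ltr_wpDl.
  have hN : forall p, exists N, forall j, (N <= j)%N -> abs (iota (f j 0 p - g p)) < e / (W + 1).
    by move=> p; apply: hg.
  have [Nf hNf] := choice hN.
  have [N1 hN1] := arch e0.
  pose j := maxn (\big[maxn/0%N]_(p < m) Nf p) N1.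
  have -> : w kk 0 + lform iota b w = (w kk 0 + lform iota (f j) w) - lform iota (f j - b) w.
    by rewrite lformB; ring.
  apply: le_lt_trans (absB _ _) _; rewrite gt_max.
  rewrite (lt_trans (proj2 (hf j))) ?hN1 ?leq_maxr //=.
  apply: le_lt_trans (lform_upper _ _) _.
  have hma : ma (f j - b) < e / (W + 1).
    apply: bigmax_lt => // p; rewrite !mxE; apply: hNf.
    by apply: leq_trans _ (leq_maxl _ _); by rewrite (bigD1 p) //= leq_maxl.
  apply: le_lt_trans (_ : e / (W + 1) * W < e).
    by rewrite ler_wpM2r // ltW.
  rewrite mulrAC ltr_pdivrMr ?ltr_wpDl //; lra.
have := hind (b + \row_p ((p == kk)%:R : K)).
rewrite lformD lform_e addrC hZ => /(_ erefl) /rowP /(_ kk).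
by rewrite !mxE eqxx gk add0r => /eqP; rewrite oner_eq0.
Qed.


Lemma PP_step m (w : 'cV[C]_m) (hind : forall a, lform iota a w = 0 -> a = 0)
   k (hk : (k < m)%N) : PP w k -> PP w k.+1.
Proof.
move=> hP; have [d d0 hd] := delta_ex hind hk hP.
case: hP => M M0 hM; set kk := Ordinal hk.
set D := abs (w kk 0).
have D0 : 0 <= D by apply: absge0.
exists (M + M * D / d + d^-1).
  have i0 : 0 < d^-1 by rewrite invr_gt0.
  have j0 : 0 <= M * D / d by rewrite !mulr_ge0 // ?invr_ge0 ltW.
  lra.
move=> l hl.
set t := l 0 kk.
pose a := \row_i (if i == kk then 0 else l 0 i).
have ha : supp k a.
  move=> i hi; rewrite mxE; case: eqP => // /eqP ne; apply: hl.
  by rewrite ltn_neqAle hi andbT; apply: contra ne => /eqP e; apply/eqP/val_inj.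
have dec : l = a + t *: \row_p ((p == kk)%:R : K).
  apply/rowP => i; rewrite !mxE; case: eqP => [->|_]; first by rewrite add0r mulr1.
  by rewrite mulr0 addr0.
have hX : lform iota l w = lform iota a w + iota t * w kk 0.
  by rewrite {1}dec lformD lformZ lform_e.
set X := abs (lform iota l w).
have X0 : 0 <= X by apply: absge0.
set T := abs (iota t).
have T0 : 0 <= T by apply: absge0.
have hml : ma l <= ma a + T.
  apply: bigmax_le => [|i]; first by rewrite addr_ge0 ?ma_ge0.
  case: (eqVneq i kk) => [->|ne]; first by rewrite lerDr ma_ge0.
  have -> : l 0 i = a 0 i by rewrite mxE (negbTE ne).
  by rewrite ler_wpDr // (le_bigmax (fun i => abs (iota (a 0 i)))).
have hTd : T * d <= X.
  have [t0|tn0] := eqVneq t 0; first by rewrite /T t0 rmorph0 abs0 mul0r.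
  have hs : supp k (t^-1 *: a) by move=> i hi; rewrite mxE ha // mulr0.
  rewrite /X.
  have -> : lform iota l w = iota t * (w kk 0 + lform iota (t^-1 *: a) w).
    rewrite hX lformZ fmorphV mulrDr mulrA mulfV ?mul1r ?fmorph_eq0 //; ring.
  rewrite absM ler_wpM2l //; exact: hd.
have hma : ma a <= M * (X + T * D).
  move/le_trans: (hM _ ha); apply; rewrite ler_pM2l //.
  have -> : lform iota a w = lform iota l w - iota t * w kk 0 by rewrite hX; ring.
  apply: (le_trans (absB (lform iota l w) (iota t * w kk 0))).
  rewrite ge_max absM lerDl mulr_ge0 //=.
  by rewrite lerDr.
have hT : T <= X / d by rewrite ler_pdivlMr.
have h1 : M * D * T <= M * D * (X / d) by rewrite ler_wpM2l // mulr_ge0 // ltW.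
have -> : (M + M * D / d + d^-1) * X = M * X + M * D * (X / d) + X / d by rewrite /=; ring.
move: hml hma hT h1; set y := X / d; nra.
Qed.

Lemma Inf_pos m (w : 'cV[C]_m.+1) (hind : forall a, lform iota a w = 0 -> a = 0) :
  0 < Inf w.
Proof.
have hall : forall k, (k <= m.+1)%N -> PP w k.
  elim=> [|k IH] hk; first exact: PP0.
  exact: (PP_step hind hk (IH (ltnW hk))).
have [M M0 hM] := hall _ (leqnn _).
apply: lt_le_trans (_ : 0 < M^-1) _; first by rewrite invr_gt0.
apply: lb_le_inf; first exact: Iset_ne.
move=> y [l [hl ->]].
have hs : supp m.+1 l by move=> i hi; exfalso; move: (ltn_ord i); rewrite ltnNge hi.
have := hM l hs.
rewrite /ma hl => h.
by rewrite -(ler_pM2l M0) mulfV ?gt_eqF.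
Qed.


Definition colmax m (A : 'M[K]_m) := \big[Num.max/0]_(p < m) normv abs (col p (map_mx iota A)).
Definition rowmax m (A : 'M[K]_m) := \big[Num.max/0]_(i < m) ma (row i A).

Lemma ma_mul m (v : 'rV[K]_m) (A : 'M[K]_m) : ma (v *m A) <= ma v * colmax A.
Proof.
apply: bigmax_le => [|p]; first by rewrite mulr_ge0 ?ma_ge0 ?bigmax_ge0.
have -> : iota ((v *m A) 0 p) = lform iota v (col p (map_mx iota A)).
  rewrite /lform !mxE rmorph_sum; apply: eq_bigr => i _; by rewrite !mxE rmorphM.
apply: le_trans (lform_upper _ _) _; rewrite ler_wpM2l ?ma_ge0 //.
exact: (le_bigmax (fun p => normv abs (col p (map_mx iota A)))).
Qed.

Lemma gmul_entry m (A : 'M[K]_m) (w : 'cV[C]_m) i : (map_mx iota A *m w) i 0 = lform iota (row i A) w.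
Proof. by rewrite /lform mxE; apply: eq_bigr => j _; rewrite !mxE. Qed.

Lemma lform_mul m (l : 'rV[K]_m) (A : 'M[K]_m) (w : 'cV[C]_m) : lform iota l (map_mx iota A *m w) = lform iota (l *m A) w.
Proof.
rewrite /lform; under eq_bigr do rewrite mxE big_distrr /=.
rewrite exchange_big /=; apply: eq_bigr => j _; rewrite mxE rmorph_sum big_distrl /=.
by apply: eq_bigr => i _; rewrite !mxE rmorphM mulrA.
Qed.

Lemma lform_scale m (l : 'rV[K]_m) (c : C) (w : 'cV[C]_m) : lform iota l (c *: w) = c * lform iota l w.
Proof.
rewrite /lform mulr_sumr; apply: eq_bigr => i _; by rewrite mxE mulrCA.
Qed.

Lemma normv_mul m (A : 'M[K]_m) (w : 'cV[C]_m) : normv abs (map_mx iota A *m w) <= rowmax A * normv abs w.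
Proof.
apply: bigmax_le => [|i]; first by rewrite mulr_ge0 ?bigmax_ge0.
rewrite gmul_entry; apply: le_trans (lform_upper _ _) _.
rewrite ler_wpM2r ?bigmax_ge0 //; exact: (le_bigmax (fun i => ma (row i A))).
Qed.

Lemma normv_scale m (c : C) (w : 'cV[C]_m) : normv abs (c *: w) <= abs c * normv abs w.
Proof.
apply: bigmax_le => [|i]; first by rewrite mulr_ge0 ?bigmax_ge0.
by rewrite mxE absM ler_wpM2l // (le_bigmax (fun i => abs (w i 0))).
Qed.


Lemma inv_bound (x y c : R) : 0 < x -> 0 < y -> y <= c * x -> x^-1 <= c * y^-1.
Proof.
move=> x0 y0 h; rewrite -(ler_pM2l x0) mulfV ?gt_eqF //.
have -> : x * (c * y^-1) = (c * x) / y by ring.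
by rewrite ler_pdivlMr // mul1r.
Qed.

Lemma main_sec (xi : C) (Hxi : xi != 0) (n : nat)
    (gamma : 'M[K]_n.+1) (Hgamma : gamma \in unitmx) :
  exists c1 c2 c3 : R, 0 < c1 /\ 0 < c2 /\ 0 < c3 /\
    forall omega : 'cV[C]_n.+1, Omega iota xi omega ->
      [/\ hgt iota abs omega <= c1 * abs (jfac iota xi gamma omega) * (normv abs omega)^-1,
          c1 * abs (jfac iota xi gamma omega) * (normv abs omega)^-1 <= 1,
          normv abs (gact iota xi gamma omega) <= c2 * (hgt iota abs omega)^-1
        & hgt iota abs (gact iota xi gamma omega) >= c3 * hgt iota abs omega].
Proof.
set g := row ord_max gamma.
have gn0 : 0 < ma g.
  have [k hk] := bigmax_attained (fun i => abs (iota (g 0 i))).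
  have mae : ma g = abs (iota (g 0 k)) by apply: bigmax_eq => //; apply: absge0.
  have [gk0|gk0] := eqVneq (g 0 k) 0; last by rewrite mae abs_gt0 // fmorph_eq0.
  exfalso.
  have g0 : g = 0.
    apply/rowP => j; rewrite [RHS]mxE; apply/eqP; rewrite -(fmorph_eq0 iota); apply/eqP.
    apply/(abs_eq0 Hset)/le_anti; rewrite absge0 andbT.
    by have := hk j; rewrite gk0 rmorph0 abs0.
  have := row_mul ord_max gamma (invmx gamma).
  rewrite mulmxV // -/g g0 mul0mx => /rowP /(_ ord_max).
  by rewrite !mxE eqxx /= => /eqP; rewrite oner_eq0.
set G := rowmax gamma.
have G0 : 0 < G by apply: lt_le_trans gn0 _; exact: (le_bigmax (fun i => ma (row i gamma))).
set H := colmax (invmx gamma).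
have H0 : 0 <= H by apply: bigmax_ge0.
have xi0 : 0 < abs xi by apply: abs_gt0.
exists (abs xi / ma g), (abs xi / ma g * G), (G * (H + 1))^-1.
have c10 : 0 < abs xi / ma g by rewrite divr_gt0.
split=> //; split; first by rewrite mulr_gt0.
split; first by rewrite invr_gt0 mulr_gt0 // ltr_wpDl.
move=> w [hlast hind].
set c1 := abs xi / ma g.
set N := normv abs w.
have N0 : 0 < N.
  apply: lt_le_trans xi0 _; rewrite -hlast.
  exact: (le_bigmax (fun i => abs (w i 0))).
set I := Inf w.
have I0 : 0 < I by apply: Inf_pos.
have jE : jfac iota xi gamma w = xi^-1 * lform iota g w by rewrite /jfac gmul_entry.
set L := abs (lform iota g w).
have hlow : ma g * I <= L by apply: lform_lower.
have hup : L <= ma g * N by apply: lform_upper.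
set J := abs (jfac iota xi gamma w).
have JE : J = (abs xi)^-1 * L by rewrite /J jE absM absV.
have L0 : 0 < L by apply: lt_le_trans hlow; rewrite mulr_gt0.
have J0 : 0 < J by rewrite JE mulr_gt0 // invr_gt0.
have hc1J : c1 * J = L / ma g.
  by rewrite JE /c1; field; rewrite !gt_eqF.
have hE : hgt iota abs w = N^-1 * I by [].
have IcJ : I <= c1 * J by rewrite hc1J ler_pdivlMr // mulrC.
have gactE : gact iota xi gamma w = (jfac iota xi gamma w)^-1 *: (map_mx iota gamma *m w) by [].
have hng : normv abs (gact iota xi gamma w) <= J^-1 * (G * N).
  rewrite gactE; apply: le_trans (normv_scale _ _) _.
  rewrite absV; apply: ler_wpM2l; [by rewrite invr_ge0 ltW | exact: normv_mul].
split.
- rewrite hE [_ * N^-1]mulrC ler_pM2l ?invr_gt0 //; exact: IcJ.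
- rewrite hc1J -mulrA -invfM ler_pdivrMr ?mulr_gt0 // mul1r; exact: hup.
- rewrite hE invfM invrK; apply: le_trans hng _.
  have hJi := inv_bound J0 I0 IcJ.
  apply: le_trans (_ : c1 * I^-1 * (G * N) <= _).
    by apply: ler_wpM2r => //; rewrite mulr_ge0 ?ltW.
  by rewrite le_eqVlt; apply/orP; left; apply/eqP; ring.
- set w' := gact iota xi gamma w.
  have hInf : J^-1 * (H + 1)^-1 * I <= Inf w'.
    apply: lb_le_inf; first exact: Iset_ne.
    move=> y [l [hl ->]].
    rewrite /w' gactE lform_scale lform_mul absM absV -/J -mulrA ler_pM2l ?invr_gt0 //.
    apply: le_trans (lform_lower _ _); rewrite ler_pM2r //.
    have h1 : 1 <= ma (l *m gamma) * (H + 1).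
      have e1 : ma l = 1 by [].
      rewrite -e1; apply: le_trans (_ : ma (l *m gamma *m invmx gamma) <= _).
        by rewrite mulmxK.
      apply: le_trans (ma_mul _ _) _; apply: ler_wpM2l; [exact: ma_ge0 | rewrite /H; lra].
    by rewrite -[X in X <= _]mul1r ler_pdivrMr // ltr_wpDl.
  have hw'0 : 0 < normv abs w'.
    apply: lt_le_trans xi0 _.
    have -> : abs xi = abs (w' ord_max 0).
      have jn0 : jfac iota xi gamma w != 0 by apply/eqP => e; move: J0; rewrite /J e abs0 ltxx.
      rewrite /w' gactE mxE; congr abs.
      have -> : (map_mx iota gamma *m w) ord_max 0 = xi * jfac iota xi gamma w.
        by rewrite /jfac mulrA mulfV ?mul1r.
      by rewrite mulrC -mulrA mulfV ?mulr1.
    exact: (le_bigmax (fun i => abs (w' i 0))).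
  have hB : (J^-1 * (G * N))^-1 <= (normv abs w')^-1.
    have B0 : 0 < J^-1 * (G * N) by rewrite !mulr_gt0 // invr_gt0.
    by have := @inv_bound _ _ 1 B0 hw'0; rewrite !mul1r; apply.
  have hgw : hgt iota abs w' = (normv abs w')^-1 * Inf w' by [].
  rewrite hgw hE.
  apply: le_trans (_ : (J^-1 * (G * N))^-1 * (J^-1 * (H + 1)^-1 * I) <= _).
    rewrite le_eqVlt; apply/orP; left; apply/eqP.
    field; rewrite ?gt_eqF ?ltr_wpDl //.
  apply: ler_pM => //.
  all: apply: ltW; rewrite ?invr_gt0 !mulr_gt0 ?invr_gt0 // ?ltr_wpDl //.
Qed.

End Aux.

(* r = n.+1 >= 1 *)
Theorem lemma3p5 (R : realType) (K : fieldType) (C : closedFieldType)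
    (iota : {rmorphism K -> C}) (abs : C -> R)
    (Hset : function_field_setting iota abs)
    (xi : C) (Hxi : xi != 0) (n : nat)
    (gamma : 'M[K]_n.+1) (Hgamma : gamma \in unitmx) :
  exists c1 c2 c3 : R, 0 < c1 /\ 0 < c2 /\ 0 < c3 /\
    forall omega : 'cV[C]_n.+1, Omega iota xi omega ->
      [/\ hgt iota abs omega <= c1 * abs (jfac iota xi gamma omega) * (normv abs omega)^-1,
          c1 * abs (jfac iota xi gamma omega) * (normv abs omega)^-1 <= 1,
          normv abs (gact iota xi gamma omega) <= c2 * (hgt iota abs omega)^-1
        & hgt iota abs (gact iota xi gamma omega) >= c3 * hgt iota abs omega].
Proof. exact: (main_sec Hset Hxi Hgamma). Qed.
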